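(* Every modification of $D$ performed by any stage of the Purification procedure replaces $D$ by a cirquent of strictly smaller rank.
   Context: Cirquents: $\top$, $\bot$ and literals ($p$ or $\neg p$, $p$ an elementary letter) are cirquents; if $A,B$ are cirquents then so are $A\vee B$, $A\wedge B$, $A\sqcap^cB$ ($c$ a conjunctive cluster) and $A\sqcup^cB$ ($c$ a disjunctive cluster); clusters are drawn from two disjoint infinite sets. A surface occurrence of a subcirquent or connective is one not in the scope of any choice connective $\sqcup^c,\sqcap^c$. Tetration: ${}^1a=a$, ${}^{n+1}a=a^{({}^na)}$. Rank: $\overline{C}=1$ for $\top,\bot$ and literals; $\overline{A\sqcup^cB}=\overline{A\sqcap^cB}=\overline{A}+\overline{B}$; $\overline{A\wedge B}=5^{\overline{A}+\overline{B}}$; $\overline{A\vee B}={}^{(\overline{A}+\overline{B})}5$. Purification procedure applied to a cirquent $D$: Stages 1 through 7 are executed in order; each stage is a loop iterated until it no longer modifies the current $D$, after which the next stage begins (after Stage 7 the current $D$ is returned). Stage 1: if $D$ has a surface occurrence of $\bot\vee A$ or $A\vee\bot$, change it to $A$; next, if $D$ has a surface occurrence of $\bot\wedge A$ or $A\wedge\bot$, change it to $\bot$. Stage 2: a surface occurrence of $(A\wedge B)\vee C$ or $C\vee(A\wedge B)$ is changed to $(A\vee C)\wedge(B\vee C)$. Stage 3: a surface occurrence of $(A\sqcap^cB)\vee C$ or $C\vee(A\sqcap^cB)$ is changed to $(A\vee C)\sqcap^c(B\vee C)$. Stage 4: a surface occurrence of $A_1\vee\dots\vee A_n$ (any bracketing)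 such that for some letter $p$ both $p$ and $\neg p$ are among $A_1,\dots,A_n$ is changed to $\top$. Stage 5: a surface occurrence of $\top\vee A$ or $A\vee\top$ is changed to $\top$; next, a surface occurrence of $\top\wedge A$ or $A\wedge\top$ is changed to $A$. Stage 6: a surface occurrence of $(A\sqcap^aB)\wedge(E\sqcap^bF)$ is changed to $\big((A\wedge(E\sqcap^bF))\sqcap^a(B\wedge(E\sqcap^bF))\big)\sqcap^c\big(((A\sqcap^aB)\wedge E)\sqcap^b((A\sqcap^aB)\wedge F)\big)$, where $c$ is a conjunctive cluster not occurring in $D$. Stage 7: if $D$ is of the form $X[E\sqcap^cF]\sqcap^cA$ (resp. $A\sqcap^cX[E\sqcap^cF]$), change it to $X[E]\sqcap^cA$ (resp. $A\sqcap^cX[F]$), where $X[E\sqcap^cF]$ denotes a cirquent containing the subcirquent $E\sqcap^cF$ and $X[E]$ the result of replacing it by $E$. *)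

(* Defs.v *)
From Stdlib Require List.
From mathcomp Require Import all_boot.
Set Implicit Arguments. Unset Strict Implicit. Unset Printing Implicit Defensive.

(* Elementary letters, conjunctive clusters and disjunctive clusters are all
   represented by nat; conjunctive and disjunctive clusters are kept disjoint
   because they are used by different constructors. *)
Definition letter := nat.
Definition cclust := nat.
Definition dclust := nat.

Inductive cirquent : Type :=
| CTop : cirquent
| CBot : cirquent
| CPos : letter -> cirquent
| CNeg : letter -> cirquent
| COr  : cirquent -> cirquent -> cirquent
| CAnd : cirquent -> cirquent -> cirquent
| CCand : cclust -> cirquent -> cirquent -> cirquent
| CCor  : dclust -> cirquent -> cirquent -> cirquent.

(* Tetration: ^1 a = a, ^(n+1) a = a ^ (^n a). (^0 a := 1, never used by rank
   since the height is always >= 2 there.) *)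
Fixpoint tet (n a : nat) : nat :=
  match n with
  | 0 => 1
  | 1 => a
  | n'.+1 => a ^ tet n' a
  end.

Fixpoint rank (C : cirquent) : nat :=
  match C with
  | CTop | CBot | CPos _ | CNeg _ => 1
  | CCand _ A B | CCor _ A B => rank A + rank B
  | CAnd A B => 5 ^ (rank A + rank B)
  | COr A B => tet (rank A + rank B) 5
  end.

Fixpoint occurs_cclust (c : cclust) (C : cirquent) : bool :=
  match C with
  | CTop | CBot | CPos _ | CNeg _ => false
  | COr A B | CAnd A B | CCor _ A B => occurs_cclust c A || occurs_cclust c B
  | CCand c' A B => (c' == c) || occurs_cclust c A || occurs_cclust c B
  end.

(* Surface contexts: the hole is not in the scope of any choice connective. *)
Inductive sctx : Type :=
| SHole : sctx
| SOrL  : sctx -> cirquent -> sctx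
| SOrR  : cirquent -> sctx -> sctx
| SAndL : sctx -> cirquent -> sctx
| SAndR : cirquent -> sctx -> sctx.

Fixpoint splug (K : sctx) (X : cirquent) : cirquent :=
  match K with
  | SHole => X
  | SOrL K B => COr (splug K X) B
  | SOrR A K => COr A (splug K X)
  | SAndL K B => CAnd (splug K X) B
  | SAndR A K => CAnd A (splug K X)
  end.

Inductive gctx : Type :=
| GHole : gctx
| GOrL  : gctx -> cirquent -> gctx
| GOrR  : cirquent -> gctx -> gctx
| GAndL : gctx -> cirquent -> gctx
| GAndR : cirquent -> gctx -> gctx
| GCandL : cclust -> gctx -> cirquent -> gctx
| GCandR : cclust -> cirquent -> gctx -> gctx
| GCorL : dclust -> gctx -> cirquent -> gctx
| GCorR : dclust -> cirquent -> gctx -> gctx.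

Fixpoint gplug (K : gctx) (X : cirquent) : cirquent :=
  match K with
  | GHole => X
  | GOrL K B => COr (gplug K X) B
  | GOrR A K => COr A (gplug K X)
  | GAndL K B => CAnd (gplug K X) B
  | GAndR A K => CAnd A (gplug K X)
  | GCandL c K B => CCand c (gplug K X) B
  | GCandR c A K => CCand c A (gplug K X)
  | GCorL d K B => CCor d (gplug K X) B
  | GCorR d A K => CCor d A (gplug K X)
  end.

(* disj_of E l : E is A_1 \/ ... \/ A_n, under some bracketing, with
   l = [A_1; ...; A_n]. *)
Inductive disj_of : cirquent -> seq cirquent -> Prop :=
| disj_leaf A : disj_of A [:: A]
| disj_node A B l1 l2 : disj_of A l1 -> disj_of B l2 ->
    disj_of (COr A B) (l1 ++ l2).

Inductive local_rewrite : nat -> cirquent -> cirquent -> cirquent -> Prop :=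
| r1_orBl D A : local_rewrite 1 D (COr CBot A) A
| r1_orBr D A : local_rewrite 1 D (COr A CBot) A
| r1_andBl D A : local_rewrite 1 D (CAnd CBot A) CBot
| r1_andBr D A : local_rewrite 1 D (CAnd A CBot) CBot
| r2_l D A B C : local_rewrite 2 D (COr (CAnd A B) C) (CAnd (COr A C) (COr B C))
| r2_r D A B C : local_rewrite 2 D (COr C (CAnd A B)) (CAnd (COr A C) (COr B C))
| r3_l D c A B C : local_rewrite 3 D (COr (CCand c A B) C)
                                   (CCand c (COr A C) (COr B C))
| r3_r D c A B C : local_rewrite 3 D (COr C (CCand c A B))
                                   (CCand c (COr A C) (COr B C))
| r4 D E l p : disj_of E l -> List.In (CPos p) l -> List.In (CNeg p) l ->
    local_rewrite 4 D E CTop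
| r5_orTl D A : local_rewrite 5 D (COr CTop A) CTop
| r5_orTr D A : local_rewrite 5 D (COr A CTop) CTop
| r5_andTl D A : local_rewrite 5 D (CAnd CTop A) A
| r5_andTr D A : local_rewrite 5 D (CAnd A CTop) A
| r6 D a b c A B E F : ~~ occurs_cclust c D ->
    local_rewrite 6 D (CAnd (CCand a A B) (CCand b E F))
      (CCand c
         (CCand a (CAnd A (CCand b E F)) (CAnd B (CCand b E F)))
         (CCand b (CAnd (CCand a A B) E) (CAnd (CCand a A B) F))).

Inductive purif_step : nat -> cirquent -> cirquent -> Prop :=
| step_surface i K X Y :
    local_rewrite i (splug K X) X Y ->
    purif_step i (splug K X) (splug K Y)
| step7_l c X E F A :
    purif_step 7 (CCand c (gplug X (CCand c E F)) A) (CCand c (gplug X E) A)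
| step7_r c X E F A :
    purif_step 7 (CCand c A (gplug X (CCand c E F))) (CCand c A (gplug X F)).

(* Main.v *)
Require Import Defs.
From mathcomp Require Import all_boot.
From mathcomp Require Import zify.
Set Implicit Arguments. Unset Strict Implicit.

Lemma tetS n : tet n.+1 5 = 5 ^ tet n 5.
Proof. by case: n. Qed.

Lemma lt_exp5 x : x < 5 ^ x.
Proof. by apply: ltn_expl. Qed.

Lemma dbl_exp5 x : 2 * x < 5 ^ x.
Proof. elim: x => [|x IH] //; rewrite expnS; lia. Qed.

Lemma tet_lt_succ n : tet n 5 < tet n.+1 5.
Proof. by rewrite tetS lt_exp5. Qed.

Lemma tet_mono m n : m < n -> tet m 5 < tet n 5.
Proof.
elim: n => [|n IH] //; rewrite ltnS leq_eqVlt => /orP [/eqP -> | H].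
  exact: tet_lt_succ.
exact: ltn_trans (IH H) (tet_lt_succ n).
Qed.

Lemma tet_le m n : m <= n -> tet m 5 <= tet n 5.
Proof.
rewrite leq_eqVlt => /orP [/eqP -> // | H]; apply: ltnW; exact: tet_mono H.
Qed.

Lemma tet_gt n : n < tet n 5.
Proof.
elim: n => [|n IH] //; rewrite tetS; exact: leq_ltn_trans IH (lt_exp5 _).
Qed.

Lemma two_tet x y m : x <= m -> y <= m -> tet x 5 + tet y 5 < tet m.+1 5.
Proof.
move=> hx hy; rewrite tetS.
have := tet_le hx; have := tet_le hy; have := dbl_exp5 (tet m 5); lia.
Qed.

Lemma rank_pos C : 0 < rank C.
Proof.
elim: C => //= *; try lia; try by rewrite expn_gt0.
exact: leq_ltn_trans (leq0n _) (tet_gt _).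
Qed.

Lemma splug_mono K X Y : rank X < rank Y -> rank (splug K X) < rank (splug K Y).
Proof.
move=> H; elim: K => //= [K IH B|A K IH|K IH B|A K IH].
- apply: tet_mono; by rewrite ltn_add2r.
- apply: tet_mono; by rewrite ltn_add2l.
- rewrite ltn_exp2l //; by rewrite ltn_add2r.
- rewrite ltn_exp2l //; by rewrite ltn_add2l.
Qed.

Lemma gplug_mono K X Y : rank X < rank Y -> rank (gplug K X) < rank (gplug K Y).
Proof.
move=> H; elim: K => //= [K IH B|A K IH|K IH B|A K IH|c K IH B|c A K IH|c K IH B|c A K IH].
- apply: tet_mono; by rewrite ltn_add2r.
- apply: tet_mono; by rewrite ltn_add2l.
- rewrite ltn_exp2l //; by rewrite ltn_add2r.
- rewrite ltn_exp2l //; by rewrite ltn_add2l.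
- by rewrite ltn_add2r.
- by rewrite ltn_add2l.
- by rewrite ltn_add2r.
- by rewrite ltn_add2l.
Qed.

Lemma disj_single E l : disj_of E l -> (forall A B, E <> COr A B) -> l = [:: E].
Proof. by case=> // A B l1 l2 _ _ /(_ A B). Qed.

Lemma stage2 a b c : 0 < a -> 0 < b -> 0 < c ->
  5 ^ (tet (a + c) 5 + tet (b + c) 5) < tet (5 ^ (a + b) + c) 5.
Proof.
move=> ha hb hc.
have h1 := @two_tet (a + c) (b + c) (a + b + c).-1.
have e : (a + b + c).-1.+1 = a + b + c by lia.
rewrite e in h1.
have h2 : tet (a + b + c) 5 <= tet (5 ^ (a + b) + c).-1 5.
  apply: tet_le; have := lt_exp5 (a + b); lia.
have e2 : 5 ^ (a + b) + c = (5 ^ (a + b) + c).-1.+1.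
  have := lt_exp5 (a + b); lia.
rewrite e2 tetS ltn_exp2l //.
have := h1 ltac:(lia) ltac:(lia); lia.
Qed.

Lemma stage6 a b e f : 0 < a -> 0 < b -> 0 < e -> 0 < f ->
  5 ^ (a + (e + f)) + 5 ^ (b + (e + f)) + (5 ^ (a + b + e) + 5 ^ (a + b + f))
  < 5 ^ (a + b + (e + f)).
Proof.
move=> ha hb he hf.
set M := (a + b + e + f).-1.
have E : a + b + (e + f) = M.+1 by rewrite /M; lia.
rewrite E expnS.
have l1 : 5 ^ (a + (e + f)) <= 5 ^ M by rewrite leq_exp2l //; rewrite /M; lia.
have l2 : 5 ^ (b + (e + f)) <= 5 ^ M by rewrite leq_exp2l //; rewrite /M; lia.
have l3 : 5 ^ (a + b + e) <= 5 ^ M by rewrite leq_exp2l //; rewrite /M; lia.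
have l4 : 5 ^ (a + b + f) <= 5 ^ M by rewrite leq_exp2l //; rewrite /M; lia.
have := expn_gt0 5 M; lia.
Qed.

Lemma rank_or A B : rank (COr A B) = tet (rank A + rank B) 5. Proof. by []. Qed.
Lemma rank_and A B : rank (CAnd A B) = 5 ^ (rank A + rank B). Proof. by []. Qed.
Lemma rank_cand c A B : rank (CCand c A B) = rank A + rank B. Proof. by []. Qed.
Lemma rank_T : rank CTop = 1. Proof. by []. Qed.
Lemma rank_B : rank CBot = 1. Proof. by []. Qed.

Ltac rk := rewrite ?rank_or ?rank_and ?rank_cand ?rank_T ?rank_B.

Lemma local_lt i D X Y : local_rewrite i D X Y -> rank Y < rank X.
Proof.
case=> {i D X Y}.
- move=> _ A; rk; have := tet_gt (1 + rank A); have := rank_pos A; lia.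
- move=> _ A; rk; have := tet_gt (rank A + 1); have := rank_pos A; lia.
- move=> _ A; rk; have := lt_exp5 (1 + rank A); lia.
- move=> _ A; rk; have := lt_exp5 (rank A + 1); have := rank_pos A; lia.
- move=> _ A B C; rk; apply: stage2; exact: rank_pos.
- move=> _ A B C; rk; rewrite [rank C + 5 ^ _]addnC; apply: stage2; exact: rank_pos.
- move=> _ c A B C; rk; have := rank_pos A; have := rank_pos B; have := rank_pos C => *.
  have e : rank A + rank B + rank C = (rank A + rank B + rank C).-1.+1 by lia.
  rewrite e; apply: (@two_tet (rank A + rank C) (rank B + rank C)); lia.
- move=> _ c A B C; rk; have := rank_pos A; have := rank_pos B; have := rank_pos C => *.
  have e : rank C + (rank A + rank B) = (rank A + rank B + rank C).-1.+1 by lia.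
  rewrite e; apply: (@two_tet (rank A + rank C) (rank B + rank C)); lia.
- move=> _ E l p H HP HN.
  case: E H HP HN => [| |q|q|A B|A B|c A B|c A B] H HP HN; rk;
    try (rewrite (disj_single H) // in HP HN;
         case: HP => // [<-]; case: HN => // [[]]; discriminate).
  all: try (rewrite (disj_single H) // in HP;
         case: HP => // [[]]; discriminate).
  all: try (rewrite (disj_single H) // in HN;
         case: HN => // [[]]; discriminate).
  rewrite /=; apply: leq_trans _ (tet_le (_ : 2 <= _)).
    by [].
  have := rank_pos A; have := rank_pos B; lia.
- move=> _ A; rk; have := tet_gt (1 + rank A); have := rank_pos A; lia.
- move=> _ A; rk; have := tet_gt (rank A + 1); have := rank_pos A; lia.
- move=> _ A; rk; have := lt_exp5 (1 + rank A); lia.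
- move=> _ A; rk; have := lt_exp5 (rank A + 1); lia.
- move=> _ a b c A B E F _; rk; apply: stage6; exact: rank_pos.
Qed.

Theorem lemma7p4 (i : nat) (D D' : cirquent) :
  purif_step i D D' -> rank D' < rank D.
Proof.
case=> {i D D'}.
- move=> i K X Y H; apply: splug_mono; exact: local_lt H.
- move=> c X E F A /=; rewrite ltn_add2r; apply: gplug_mono => /=.
  by rewrite -[X in X < _]addn0 ltn_add2l rank_pos.
- move=> c X E F A /=; rewrite ltn_add2l; apply: gplug_mono => /=.
  by rewrite -[X in X < _]add0n ltn_add2r rank_pos.
Qed.
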